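(* Let $q>7$ be a prime and $a$ a positive integer. Then $$\nu_q\Big(\prod_{p\le a}(p-1)\Big)\le \frac{0.23\,a}{q-1}+\frac{7\log a}{\log q},$$ where the product is over primes $p\le a$.
   Context: For a prime $q$ and nonzero integer $n$, $\nu_q(n)$ denotes the exponent of $q$ in the prime factorisation of $n$. The letter $p$ denotes primes. *)

(* Defs.v *)
From mathcomp Require Import all_boot.
From Stdlib Require Import Reals.

Definition prod_pm1 (a : nat) : nat :=
  \prod_(0 <= p < a.+1 | prime p) (p - 1).

(* Main.v *)
Require Import Defs.
From mathcomp Require Import all_boot.
From mathcomp Require Import zify.


Definition goodb (x : nat) : bool :=
  [&& ~~ (2 %| x), ~~ (3 %| x), ~~ (5 %| x) & ~~ (7 %| x)].
Definition goodm (u m : nat) : bool := goodb (1 + u * m).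

Lemma goodb_mod x : goodb (x %% 210) = goodb x.
Proof.
rewrite /goodb /dvdn !(@modn_dvdm 210) //.
Qed.

Lemma goodm_mod u m : goodm (u %% 210) m = goodm u m.
Proof.
rewrite /goodm -goodb_mod -modnDmr modnMml modnDmr goodb_mod //.
Qed.

Lemma goodm_per u m : goodm u (210 + m) = goodm u m.
Proof.
rewrite /goodm -goodb_mod mulnDr addnCA -modnDml (modnMl u 210) add0n goodb_mod //.
Qed.

Fixpoint cntf (u x n : nat) : nat :=
  match n with 0 => 0 | n'.+1 => goodb x + cntf u ((x + u) %% 210) n' end.

Lemma cntfE u n m : cntf u ((1 + u * m) %% 210) n = count (goodm u) (iota m n).
Proof.
elim: n m => [|n IH] m //=.
rewrite goodb_mod modnDml -addnA [u * _ + u]addnC -mulnS IH //.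
Qed.

Fixpoint chk (u x c r A B n : nat) : bool :=
  (A <= B) &&
  match n with 0 => true | n'.+1 =>
    chk u ((x + u) %% 210) (c + goodb x) r.+1 (if goodb x then A + 210 else A) (B + 48) n' end.

Lemma chkE u n : forall x c r A B, chk u x c r A B n -> x = (1 + u * r.+1) %% 210 ->
  c = count (goodm u) (iota 1 r) -> A = 210 * c -> B = 48 * r + 630 ->
  forall s, s <= n -> 210 * count (goodm u) (iota 1 (r + s)) <= 48 * (r + s) + 630.
Proof.
elim: n => [|n IH] x c r A B /= /andP[H1 H2] Hx Hc HA HB s Hs.
  move: Hs; rewrite leqn0 => /eqP ->; rewrite !addn0 -Hc -HA -HB //.
case: s Hs => [|s] Hs; first by rewrite !addn0 -Hc -HA -HB.
have Hc' : c + goodb x = count (goodm u) (iota 1 r.+1).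
  rewrite -[r.+1]addn1 iotaD count_cat Hc /= addn0 Hx goodb_mod add1n /goodm //.
rewrite -addSnnS; apply: (IH _ _ _ _ _ H2) => //.
- rewrite Hx modnDml -addnA [u * _ + u]addnC -mulnS //.
- rewrite HA mulnDr; case: (goodb x) => /=; rewrite ?muln1 ?muln0 ?addn0 //.
- rewrite HB mulnS; lia.
Qed.

Definition allchk : bool :=
  all (fun u => if goodb u then (if chk u ((1 + u) %% 210) 0 0 0 630 209 then cntf u ((1 + u) %% 210) 210 == 48 else false) else true)
    (iota 0 210).

Lemma allchk_ok : allchk.
Proof. vm_compute. reflexivity. Qed.


Lemma count_bound u M : goodb u ->
  210 * count (goodm u) (iota 1 M) <= 48 * M + 630.
Proof.
move=> gu; rewrite -(eq_count (goodm_mod u)).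
have gu' : goodb (u %% 210) by rewrite goodb_mod.
have hu : u %% 210 \in iota 0 210 by rewrite mem_iota ltn_mod.
have := allP allchk_ok _ hu.
move: (u %% 210) gu' => v gv.
rewrite gv.
case Hc: (chk _ _ _ _ _ _ _) => // /eqP Hn.
elim/ltn_ind: M => M IH.
case: (ltnP M 210) => HM.
  have := @chkE v 209 _ 0 0 0 630 Hc; rewrite muln1 => /(_ erefl erefl erefl erefl M).
  by rewrite !add0n; apply; rewrite -ltnS.
have -> : M = 210 + (M - 210) by lia.
rewrite iotaD count_cat.
have -> : count (goodm v) (iota 1 210) = 48.
  by rewrite -cntfE muln1.
rewrite -[1 + 210]addnC iotaDl count_map.
rewrite (eq_count (a2 := goodm v)); last by move=> m /=; rewrite goodm_per.
have := IH (M - 210) ltac:(lia). lia.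
Qed.

Lemma prime_goodb p : prime p -> 7 < p -> goodb p.
Proof.
move=> /primeP [_ H] Hp; rewrite /goodb.
by apply/and4P; split; apply/negP => /H /orP [] /eqP E; lia.
Qed.

Lemma goodb_pow q n : prime q -> 7 < q -> goodb (q ^ n.+1).
Proof.
move=> pq q7; have := prime_goodb _ pq q7; rewrite /goodb.
by rewrite !Euclid_dvdX // !andbT.
Qed.

Lemma logn_prod_seq q (s : seq nat) (P : pred nat) (F : nat -> nat) :
  (forall i, P i -> 0 < F i) ->
  logn q (\prod_(i <- s | P i) F i) = \sum_(i <- s | P i) logn q (F i).
Proof.
move=> HF; elim: s => [|x s IH]; first by rewrite !big_nil logn1.
rewrite !big_cons; case: ifP => // Px.
rewrite lognM ?IH // ?HF //.
by apply: prodn_cond_gt0 => i; apply: HF.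
Qed.

Lemma sum_ltn K L : L <= K -> \sum_(k < K) (k < L) = L.
Proof.
elim: K L => [|K IH] L HL; first by rewrite big_ord0; lia.
rewrite big_ord_recr /=.
case: (ltnP K L) => H.
  have : L = K.+1 by lia.
  move=> E; rewrite E /=.
  have -> : \sum_(i < K) (i < K.+1) = \sum_(i < K) (i < K).
    by apply: eq_bigr => i _; rewrite ltnS ltnW // ltn_ord.
  by rewrite IH // addn1.
by rewrite IH // addn0; lia.
Qed.

Lemma S_bound q K : 0 < q -> forall a, (q - 1) * \sum_(k < K) a %/ q ^ k.+1 <= a.
Proof.
move=> q0; elim: K => [|K IH] a; first by rewrite big_ord0 muln0.
rewrite big_ord_recl /=.
under eq_bigr => i _ do rewrite expnS divnMA.
rewrite expn1 mulnDr.
apply: leq_trans (leq_add (leqnn _) (IH (a %/ q))) _.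
rewrite -{2}[a %/ q]mul1n -mulnDl subnK // mulnC leq_divM //.
Qed.

Lemma count_primes_le q k a : prime q -> 7 < q ->
  count (fun p => prime p && (q ^ k.+1 %| p - 1)) (iota 0 a.+1)
  <= count (goodm (q ^ k.+1)) (iota 1 ((a - 1) %/ q ^ k.+1)).
Proof.
move=> pq q7.
set Q := q ^ k.+1.
have Qq : q <= Q by rewrite /Q -{1}(expn1 q) leq_exp2l ?prime_gt1.
set P := fun p => prime p && (Q %| p - 1).
rewrite -!size_filter.
have HP : forall p, p \in [seq x <- iota 0 a.+1 | P x] ->
   [/\ prime p, p <= a, 2 <= p & (p - 1) %/ Q * Q = p - 1].
  move=> p; rewrite mem_filter mem_iota /P => /andP[/andP[pp dv] /andP[_ pa]].
  split.
  - exact: pp.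
  - by rewrite -ltnS.
  - exact: prime_gt1.
  - exact: divnK.
rewrite -(size_map (fun p => (p - 1) %/ Q)).
apply: uniq_leq_size.
  rewrite map_inj_in_uniq; first by apply: filter_uniq; apply: iota_uniq.
  move=> x y /HP [_ _ x2 ex] /HP [_ _ y2 ey] exy.
  rewrite exy in ex; lia.
move=> m /mapP [p /HP [pp pa p2 ep] ->].
have Q0 : 0 < Q by lia.
have Qp : Q <= p - 1.
  have : 0 < (p - 1) %/ Q.
    case E: ((p - 1) %/ Q) => //; rewrite E in ep; lia.
  by rewrite divn_gt0.
rewrite mem_filter mem_iota; apply/andP; split.
  rewrite /goodm mulnC ep.
  have -> : 1 + (p - 1) = p by lia.
  apply: prime_goodb => //; lia.
apply/andP; split; first by rewrite divn_gt0.
rewrite add1n ltnS; apply: leq_div2r; lia.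
Qed.

Lemma main_nat q a : prime q -> 7 < q -> 0 < a ->
  210 * (q - 1) * logn q (prod_pm1 a) <= 48 * a + 630 * (q - 1) * trunc_log q a.
Proof.
move=> pq q7 a0.
set K := trunc_log q a.
have q1 : 1 < q by lia.
have E : logn q (prod_pm1 a) =
   \sum_(k < K) count (fun p => prime p && (q ^ k.+1 %| p - 1)) (iota 0 a.+1).
  rewrite /prod_pm1 logn_prod_seq; last first.
    by move=> i pi; have := prime_gt1 pi; lia.
  rewrite big_seq_cond.
  rewrite (eq_bigr (fun p => \sum_(k < K) (q ^ k.+1 %| p - 1))); last first.
    move=> p /andP [pin pp].
    have p1 : 0 < p - 1 by have := prime_gt1 pp; lia.
    under eq_bigr => k _ do rewrite pfactor_dvdn //.
    rewrite sum_ltn //.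
    apply: trunc_log_max => //.
    apply: leq_trans (dvdn_leq p1 (pfactor_dvdnn _ _)) _.
    move: pin; rewrite mem_index_iota; lia.
  rewrite -big_seq_cond exchange_big.
  apply: eq_bigr => k _.
  rewrite -sum1_count big_mkcondr /=.
  by apply: eq_bigr => p _; case: (_ %| _).
rewrite E.
set C := \sum_(k < K) _.
set S := \sum_(k < K) a %/ q ^ k.+1.
have H1 : 210 * C <= 48 * S + 630 * K.
  rewrite /C /S big_distrr /= big_distrr /=.
  have -> : 630 * K = \sum_(k < K) 630 by rewrite sum_nat_const card_ord mulnC.
  rewrite -big_split /=.
  apply: leq_sum => k _.
  apply: leq_trans (leq_mul (leqnn 210) (count_primes_le q k a pq q7)) _.
  apply: leq_trans (count_bound _ _ (goodb_pow _ _ pq q7)) _.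
  by rewrite leq_add2r leq_mul2l leq_div2r ?orbT ?leq_subr.
have H2 : (q - 1) * S <= a by apply: S_bound; lia.
have H3 : (q - 1) * (210 * C) <= (q - 1) * (48 * S + 630 * K) by rewrite leq_mul2l H1 orbT.
rewrite mulnDr in H3.
have H4 : (q - 1) * (48 * S) <= 48 * a by rewrite mulnCA leq_mul2l H2 orbT.
have -> : 210 * (q - 1) * C = (q - 1) * (210 * C) by rewrite mulnCA mulnA.
apply: leq_trans H3 _.
apply: leq_add H4 _.
by rewrite mulnCA mulnA.
Qed.

From Stdlib Require Import Reals Lra.

Lemma INR_le n m : n <= m -> (INR n <= INR m)%R.
Proof. by move/leP; apply: le_INR. Qed.

Lemma INR_expn q K : INR (expn q K) = (INR q ^ K)%R.
Proof.
elim: K => [|K IH] //=.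
by rewrite expnS mulnE mult_INR IH.
Qed.

Lemma INR_muln m n : INR (m * n) = (INR m * INR n)%R.
Proof. by rewrite mulnE mult_INR. Qed.
Lemma INR_addn m n : INR (m + n) = (INR m + INR n)%R.
Proof. by rewrite addnE plus_INR. Qed.

Theorem lemma5p1 (q a : nat) (hq : prime q) (hq7 : 7 < q) (ha : 0 < a) :
  (INR (logn q (prod_pm1 a))
   <= (23 / 100) * INR a / INR (q - 1) + 7 * ln (INR a) / ln (INR q))%R.
Proof.
have H := INR_le _ _ (main_nat q a hq hq7 ha).
rewrite (INR_addn (48 * a)) (INR_muln 48 a) (INR_muln (210 * (q - 1))) (INR_muln 210 (q - 1)) (INR_muln (630 * (q - 1))) (INR_muln 630 (q - 1)) in H.
have e1 : INR 210 = 210%R by rewrite INR_IZR_INZ.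
have e2 : INR 48 = 48%R by rewrite INR_IZR_INZ.
have e3 : INR 630 = 630%R by rewrite INR_IZR_INZ.
rewrite e1 e2 e3 in H.
have q1 : 1 < q by apply: prime_gt1.
have HK := trunc_logP q1 ha.
have HKR := INR_le _ _ HK.
rewrite INR_expn in HKR.
set C := INR (logn q (prod_pm1 a)) in H *.
set A := INR a in H HKR *.
set Q1 := INR (q - 1) in H *.
set K := INR (trunc_log q a) in H *.
set Qr := INR q in HKR *.
have Qr1 : (1 < Qr)%R by rewrite /Qr; change 1%R with (INR 1); apply: lt_INR; apply/ltP.
have Q1p : (0 < Q1)%R by rewrite /Q1; change 0%R with (INR 0); apply: lt_INR; apply/ltP; rewrite subn_gt0.
have K0 : (0 <= K)%R by apply: pos_INR.
have lnq : (0 < ln Qr)%R by rewrite -ln_1; apply: ln_increasing; lra.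
have lnK : (K * ln Qr <= ln A)%R.
  rewrite -ln_pow; last lra.
  case: (Rle_lt_or_eq_dec _ _ HKR) => h; last by rewrite h; lra.
  apply: Rlt_le; apply: ln_increasing => //; apply: pow_lt; lra.
have lnK' : (K <= ln A / ln Qr)%R.
  apply: (Rmult_le_reg_r (ln Qr)) => //.
  field_simplify; lra.
have A0 : (0 <= A)%R by apply: pos_INR.
have y0 : (0 <= A / Q1)%R by apply: Rmult_le_pos => //; apply: Rlt_le; apply: Rinv_0_lt_compat.
have HA : A = (A / Q1 * Q1)%R by field; lra.
have H' : (210 * C <= 48 * (A / Q1) + 630 * K)%R.
  apply: (Rmult_le_reg_r Q1) => //.
  rewrite HA in H; move: H; set y := (A / Q1)%R; nra.
have -> : (23 / 100 * A / Q1 = 23 / 100 * (A / Q1))%R by field; lra.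
have -> : (7 * ln A / ln Qr = 7 * (ln A / ln Qr))%R by field; lra.
lra.
Qed.
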